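(* For any attacker mixed strategy $\sigma_a$ (a probability distribution over subsets of $C$ of size at most $k_a$), the set function $g(S_d\mid\sigma_a)=\mathbb{E}_{S_a\sim\sigma_a}[f(\emptyset,S_a)-f(S_d,S_a)]$, defined on subsets $S_d\subseteq C$, is monotone and submodular.
   Context: Setting: voters $V$, channels $C$, edge probabilities $p_{uv},q_{uv}\in[0,1]$ (0 for non-edges), known preferences $\theta_v\in\{0,1\}$, and $f(S_d,S_a)=\sum_{v\in V}\theta_v\left(\prod_{u\in S_d}(1-q_{uv})\right)\left(1-\prod_{u\in S_a}(1-p_{uv})\right)$. A set function $h$ is monotone if $h(A\cup\{u\})\ge h(A)$ for all $A,u$, and submodular if $h(B\cup\{u\})-h(B)\le h(A\cup\{u\})-h(A)$ for all $A\subseteq B$ and $u\notin B$. *)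

(* Defs.v *)
From mathcomp Require Import all_boot all_order all_algebra.
Set Implicit Arguments. Unset Strict Implicit. Unset Printing Implicit Defensive.
Import Order.TTheory GRing.Theory Num.Theory.
Local Open Scope ring_scope.

Section Model.
Variables (R : realFieldType) (V C : finType).

Definition fval (p q : C -> V -> R) (theta : V -> bool) (Sd Sa : {set C}) : R :=
  \sum_(v : V) (theta v)%:R *
     (\prod_(u in Sd) (1 - q u v)) * (1 - \prod_(u in Sa) (1 - p u v)).

Definition mixed_strategy (ka : nat) (sigma : {ffun {set C} -> R}) : Prop :=
  (forall S, 0 <= sigma S) /\ (\sum_(S : {set C}) sigma S = 1) /\
  (forall S : {set C}, (ka < #|S|)%N -> sigma S = 0).

Definition gval (p q : C -> V -> R) (theta : V -> bool) (sigma : {ffun {set C} -> R})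
  (Sd : {set C}) : R :=
  \sum_(Sa : {set C}) sigma Sa * (fval p q theta set0 Sa - fval p q theta Sd Sa).

Definition monotone_setfun (h : {set C} -> R) : Prop :=
  forall (A : {set C}) (u : C), h A <= h (u |: A).

Definition submodular_setfun (h : {set C} -> R) : Prop :=
  forall (A B : {set C}) (u : C), A \subset B -> u \notin B ->
    h (u |: B) - h B <= h (u |: A) - h A.
End Model.

(* Main.v *)
Require Import Defs.
From mathcomp Require Import all_boot all_order all_algebra.
From mathcomp Require Import ring.
Import Order.TTheory GRing.Theory Num.Theory.
Local Open Scope ring_scope.

Section H.
Variables (R : realFieldType) (V C : finType).
Variables (p q : C -> V -> R) (theta : V -> bool).
Hypothesis hp : forall u v, 0 <= p u v <= 1.
Hypothesis hq : forall u v, 0 <= q u v <= 1.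

Definition PP (S : {set C}) v := \prod_(u in S) (1 - q u v).

Lemma q01 u v : 0 <= 1 - q u v <= 1.
Proof. have /andP[h1 h2] := hq u v. apply/andP; split.
  by rewrite subr_ge0. by rewrite lerBlDr lerDl. Qed.
Lemma p01 u v : 0 <= 1 - p u v <= 1.
Proof. have /andP[h1 h2] := hp u v. apply/andP; split.
  by rewrite subr_ge0. by rewrite lerBlDr lerDl. Qed.

Lemma PP01 S v : 0 <= PP S v <= 1.
Proof. apply/andP; split.
  by apply: prodr_ge0 => u _; have /andP[] := q01 u v.
  by apply: prodr_ile1 => u _; exact: q01. Qed.

Lemma a_ge0 (S : {set C}) v : 0 <= 1 - \prod_(u in S) (1 - p u v).
Proof. rewrite subr_ge0. by apply: prodr_ile1 => u _; exact: p01. Qed.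

Lemma PP_sub (A B : {set C}) v : A \subset B -> PP B v <= PP A v.
Proof. move=> hAB. rewrite /PP (big_setID A) /= (setIidPr hAB).
  have /andP[h0 h1] := PP01 A v.
  rewrite -[X in _ <= X]mulr1. apply: (ler_wpM2l h0).
  by apply: prodr_ile1 => u _; exact: q01. Qed.

Lemma PP_add (A : {set C}) u v : u \notin A -> PP (u |: A) v = (1 - q u v) * PP A v.
Proof. by move=> h; rewrite /PP big_setU1. Qed.

Definition D (A : {set C}) u Sa := fval p q theta A Sa - fval p q theta (u |: A) Sa.

Lemma DE (A : {set C}) u Sa : D A u Sa = \sum_v (theta v)%:R * (PP A v - PP (u |: A) v)
   * (1 - \prod_(w in Sa) (1 - p w v)).
Proof. rewrite /D /fval -sumrB; apply: eq_bigr => v _; rewrite /PP; ring. Qed.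

Lemma gdiff sigma (A : {set C}) u : gval p q theta sigma (u |: A) - gval p q theta sigma A
  = \sum_Sa sigma Sa * D A u Sa.
Proof. rewrite /gval -sumrB; apply: eq_bigr => Sa _; rewrite /D; ring. Qed.

Lemma PPdiff_ge0 (A : {set C}) u v : 0 <= PP A v - PP (u |: A) v.
Proof. rewrite subr_ge0; apply: PP_sub; exact: subsetUr. Qed.

Lemma D_ge0 (A : {set C}) u Sa : 0 <= D A u Sa.
Proof. rewrite DE; apply: sumr_ge0 => v _; apply: mulr_ge0; last exact: a_ge0.
  apply: mulr_ge0; [exact: ler0n | exact: PPdiff_ge0]. Qed.

Lemma D_le (A B : {set C}) u Sa : A \subset B -> u \notin B -> D B u Sa <= D A u Sa.
Proof. move=> hAB hu. have huA : u \notin A.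
  by apply/negP => /(subsetP hAB); apply/negP.
  rewrite !DE; apply: ler_sum => v _; apply: ler_wpM2r; first exact: a_ge0.
  apply: ler_wpM2l; first exact: ler0n.
  rewrite !PP_add //.
  have E : forall x y : R, x - y * x = (1 - y) * x by move=> x y; ring.
  rewrite !E.
  have /andP[h1 _] := q01 u v.
  apply: ler_wpM2l; first by rewrite subr_ge0; have /andP[] := q01 u v.
  exact: PP_sub. Qed.
End H.

Theorem mainTheorem4 (R : realFieldType) (V C : finType)
  (p q : C -> V -> R) (theta : V -> bool) (ka : nat)
  (sigma : {ffun {set C} -> R}) :
  (forall u v, 0 <= p u v <= 1) -> (forall u v, 0 <= q u v <= 1) ->
  mixed_strategy ka sigma ->
  monotone_setfun (gval p q theta sigma) /\
  submodular_setfun (gval p q theta sigma).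
Proof.
move=> hp hq [hs _]. split.
- move=> A u. rewrite -subr_ge0 gdiff. apply: sumr_ge0 => Sa _.
  apply: mulr_ge0 => //; exact: D_ge0.
- move=> A B u hAB hu. rewrite !gdiff. apply: ler_sum => Sa _.
  apply: ler_wpM2l => //. exact: D_le.
Qed.
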